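(* Fix $\delta\in(0,1)$. For $x$ large enough and any $\epsilon>0$, $$\sum_{\substack{x^{\delta}<d\le x\\ d\in \mathcal S(x,(\log x)^2)}}\frac{3^{\omega(d)}}{d}\ \ll\ x^{-\frac{\delta}{2}+\epsilon}.$$ Moreover, there is a positive constant $c$ such that for every positive integer $t$ with $x^{1/t}\ge(\log x)^2$, $$\sum_{\substack{x^{\delta}<d\le x\\ d\in \mathcal S(x,x^{1/t})}}\frac{3^{\omega(d)}}{d}\ \ll\ (\log x)^3\exp(-c\,t\log t).$$
   Context: For $x,y\ge1$, $\mathcal S(x,y)$ denotes the set of natural numbers less than $x$ all of whose prime factors are less than $y$ ($y$-smooth numbers). $\omega(d)$ denotes the number of distinct prime divisors of $d$. *)

(* Defs.v *)
From HB Require Import structures.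
From mathcomp Require Import all_boot all_order all_algebra.
From mathcomp Require Import all_classical all_reals all_analysis.
Set Implicit Arguments. Unset Strict Implicit. Unset Printing Implicit Defensive.
Import Order.TTheory GRing.Theory Num.Theory.
Local Open Scope ring_scope.

Definition omega (d : nat) : nat := size (primes d).

Definition in_smooth {R : realType} (x y : R) (d : nat) : bool :=
  (0 < d)%N && (d%:R < x) && all (fun p : nat => p%:R < y) (primes d).

Definition smooth_sum {R : realType} (x delta y : R) : R :=
  \sum_(d < (Num.trunc x).+1 |
          (powR x delta < (d : nat)%:R) && ((d : nat)%:R <= x) && in_smooth x y d)
     (3%:R ^+ omega d / (d : nat)%:R).

(* Main.v *)
Require Import Defs.
From HB Require Import structures.
From mathcomp Require Import all_boot all_order all_algebra.
From mathcomp Require Import all_classical all_reals all_analysis.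
Import Order.TTheory GRing.Theory Num.Theory.
Local Open Scope ring_scope.
From mathcomp Require Import zify ring lra.
Set Implicit Arguments. Unset Strict Implicit. Unset Printing Implicit Defensive.

Module ChebM.
Local Open Scope nat_scope.

Lemma binom_mid_le m : 'C(m.*2.+1, m) <= 4 ^ m.
Proof.
have h1 : 'C(m.*2.+1, m) = 'C(m.*2.+1, m.+1).
  by rewrite -bin_sub ?subSn -?addnn ?addnK //; lia.
have h2 : 'C(m.*2.+1, m) + 'C(m.*2.+1, m.+1) <= 2 ^ m.*2.+1.
  have := expnDn 1 1 m.*2.+1; rewrite addn1 => ->.
  rewrite (bigD1 (inord m)) //= (bigD1 (inord m.+1)) /=; last first.
    by apply/eqP => /(congr1 val) /=; rewrite !inordK //; lia.
  rewrite !inordK; try lia.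
  rewrite !exp1n !muln1 addnA leq_addr //.
have : 2 * 'C(m.*2.+1, m) <= 2 * 4 ^ m.
  rewrite mul2n -addnn {2}h1 (leq_trans h2) // expnS -mul2n expnM.
  by [].
by rewrite leq_pmul2l.
Qed.

Lemma prime_dvd_fact_le p k : prime p -> p %| k`! -> p <= k.
Proof.
move=> pp; elim: k => [|k IH].
  by rewrite fact0 dvdn1 => /eqP h; move: pp; rewrite h.
rewrite factS Euclid_dvdM // => /orP[h|h].
  by apply: dvdn_leq.
by apply: leqW; apply: IH.
Qed.

Lemma coprime_prod_primes a (r : seq nat) : prime a -> a \notin r ->
  (forall p, p \in r -> prime p) -> coprime a (\prod_(p <- r) p).
Proof.
move=> pa; elim: r => [|b r IH]; first by rewrite big_nil coprimen1.
rewrite inE negb_or => /andP[anb anr] h.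
rewrite big_cons coprimeMr IH ?andbT //; last by move=> p pr; apply: h; rewrite inE pr orbT.
rewrite prime_coprime // dvdn_prime2 //; last by apply: h; rewrite mem_head.
Qed.

Lemma prod_uniq_primes_dvd (r : seq nat) c : uniq r ->
  (forall p, p \in r -> prime p && (p %| c)) -> \prod_(p <- r) p %| c.
Proof.
elim: r => [|a r IH] /=; first by rewrite big_nil dvd1n.
move=> /andP[anr ur] h; have /andP[pa da] := h a (mem_head _ _).
rewrite big_cons Gauss_dvd.
  by rewrite da IH // => p pr; apply: h; rewrite inE pr orbT.
apply: coprime_prod_primes => // p pr.
have : p \in a :: r by rewrite inE pr orbT.
by move=> /h /andP[].
Qed.

Lemma mid_primes_dvd m :
  \prod_(m.+2 <= p < m.*2.+2 | prime p) p %| 'C(m.*2.+1, m).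
Proof.
rewrite -big_filter; apply: prod_uniq_primes_dvd.
  by apply: filter_uniq; apply: iota_uniq.
move=> p; rewrite mem_filter mem_index_iota => /andP[pp /andP[lo hi]].
rewrite pp /=.
have hb := @bin_fact m.*2.+1 m (leqW (leq_trans (leq_addr m m) (eq_leq (addnn m)))).
have e : m.*2.+1 - m = m.+1 by lia.
rewrite e in hb.
have : p %| 'C(m.*2.+1, m) * (m`! * m.+1`!).
  by rewrite hb dvdn_fact // prime_gt0.
rewrite Gauss_dvdl // prime_coprime // Euclid_dvdM // negb_or.
by apply/andP; split; apply/negP => /(prime_dvd_fact_le pp); lia.
Qed.

Lemma cheb n : \prod_(0 <= p < n.+1 | prime p) p <= 4 ^ n.
Proof.
elim/ltn_ind: n => n IH.
case: (leqP n 2) => hn.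
  by case: n hn {IH} => [|[|[|]]] // _; rewrite unlock.
have [m hm] : exists m, n = m.*2.+1 \/ n = m.*2.+2.
  exists (n.-1./2); have := odd_double_half n.-1; rewrite -!muln2.
  by case: (odd n.-1) => /= h; [right|left]; lia.
case: hm => e; subst n.
  rewrite (@big_cat_nat _ _ _ m.+2) //=; last lia.
  apply: (@leq_trans (4 ^ m.+1 * 4 ^ m)); last by rewrite -expnD; apply: leq_pexp2l => //; lia.
  apply: leq_mul; first by apply: IH; lia.
  apply: leq_trans (binom_mid_le m).
  by apply: dvdn_leq; [rewrite bin_gt0; lia | apply: mid_primes_dvd].
rewrite big_mkcond big_nat_recr //= -big_mkcond /=.
have -> : prime m.*2.+2 = false.
  apply/negP => pr; have h2 : 2 %| m.*2.+2 by rewrite -doubleS -muln2 dvdn_mull.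
  by rewrite (@dvdn_prime2 2 _ isT pr) in h2; move/eqP: h2; lia.
rewrite /= muln1; apply: leq_trans (IH _ _) _; first lia.
by apply: leq_pexp2l => //; lia.
Qed.

Lemma prod_widen_ge1 (f : nat -> nat) (P : pred nat) b c :
  (forall p, 0 < f p) -> b <= c ->
  \prod_(0 <= p < b | P p) f p <= \prod_(0 <= p < c) f p.
Proof.
move=> hf hbc; rewrite (@big_cat_nat _ _ _ b 0 c) //= -[X in X <= _]muln1.
apply: leq_mul.
  rewrite big_mkcond /=; apply: leq_prod => i _; case: (P i) => //.
by rewrite prodn_gt0.
Qed.

Lemma legendre n : \prod_(0 <= p < n.+1 | prime p) p ^ (n %/ p) <= n`!.
Proof.
rewrite -[X in _ <= X](partnT (fact_gt0 n)) /partn.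
have hf : forall p, 0 < p ^ logn p n`!.
  move=> p; rewrite expn_gt0; case: p => //= p; rewrite lognE /=.
apply: leq_trans (_ : \prod_(0 <= p < n.+1 | prime p) p ^ logn p n`! <= _).
  apply: leq_prod => p pp; apply: leq_pexp2l; first exact: prime_gt0.
  rewrite logn_fact //; case: (posnP n) => [->|n0]; first by rewrite div0n.
  by rewrite big_ltn ?ltnS // expn1 leq_addr.
apply: leq_trans (@prod_widen_ge1 (fun p => p ^ logn p n`!) prime n.+1 n`!.+1 hf _) _.
  by rewrite ltnS fact_geq.
by apply: eq_leq; apply: eq_bigl => p; rewrite inE.
Qed.

Lemma fact_le_pow n : n`! <= n ^ n.
Proof.
elim: n => // n IH; rewrite factS expnS leq_mul2l /=.
apply: leq_trans IH _; case: n => // n; by rewrite leq_exp2r.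
Qed.

Lemma prod_ext1 (f : nat -> nat) b c : b <= c ->
  (forall p, b <= p < c -> f p = 1) ->
  \prod_(0 <= p < c) f p = \prod_(0 <= p < b) f p.
Proof.
move=> hbc h; rewrite (@big_cat_nat _ _ _ b 0 c) //=.
have -> : \prod_(b <= p < c) f p = 1.
  by rewrite big_nat_cond big1 // => p /andP[/andP[h1 h2] _]; apply: h; rewrite h1 h2.
by rewrite muln1.
Qed.

Lemma factor_range d Y : 0 < d -> (forall p, p \in primes d -> p < Y) ->
  d = \prod_(0 <= p < Y) p ^ logn p d.
Proof.
move=> d0 hY.
have h1 : forall p, p ^ logn p d <> 1 -> p < Y /\ p < d.+1.
  move=> p; case: (boolP (p \in primes d)) => pd.
    split; first exact: hY.
    by move: pd; rewrite mem_primes => /and3P[_ _ /(dvdn_leq d0)].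
  by rewrite -logn_gt0 lt0n negbK in pd; rewrite (eqP pd).
rewrite -[LHS](partnT d0) /partn (eq_bigl xpredT) //.
rewrite -(@prod_ext1 _ d.+1 (maxn Y d.+1)) ?leq_maxr //; last first.
  by move=> p /andP[hp _]; apply/eqP/negPn/negP => /eqP /h1 []; lia.
rewrite -(@prod_ext1 _ Y (maxn Y d.+1)) ?leq_maxl //.
by move=> p /andP[hp _]; apply/eqP/negPn/negP => /eqP /h1 []; lia.
Qed.

End ChebM.
Import ChebM.


Section S.
Variable R : realType.

Lemma ln_prod_nat (I : Type) (r : seq I) (P : pred I) (F : I -> nat) :
  (forall i, P i -> (0 < F i)%N) ->
  ln ((\prod_(i <- r | P i) F i)%:R : R) = \sum_(i <- r | P i) ln (F i)%:R.
Proof.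
move=> hF; elim: r => [|a r IH]; first by rewrite !big_nil ln1.
rewrite !big_cons; case: (boolP (P a)) => // pa.
rewrite natrM lnM ?IH // posrE ltr0n; first exact: hF.
by apply: prodn_cond_gt0 => i pi; exact: hF.
Qed.

Lemma nat_div_ge n p : (0 < p)%N -> (n%:R / p%:R - 1 : R) <= (n %/ p)%:R.
Proof.
move=> p0; have hp : (0 : R) < p%:R by rewrite ltr0n.
rewrite lerBlDr ler_pdivrMr //.
have e := divn_eq n p; have hm := ltn_pmod n p0.
have : (n%:R : R) = (n %/ p)%:R * p%:R + (n %% p)%:R by rewrite -natrM -natrD -e.
move=> ->; rewrite mulrDl mul1r lerD2l ler_nat; lia.
Qed.

Lemma mertens1 n : (0 < n)%N ->
  \sum_(0 <= p < n.+1 | prime p) ln (p%:R : R) / p%:R <= ln n%:R + ln 4.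
Proof.
move=> n0; have hn : (0 : R) < n%:R by rewrite ltr0n.
have hL : \sum_(0 <= p < n.+1 | prime p) (n %/ p)%:R * ln (p%:R : R) <= n%:R * ln n%:R.
  have h := legendre n; have h2 := leq_trans h (fact_le_pow n).
  rewrite -(ler_nat R) in h2.
  rewrite -ler_ln ?posrE ?ltr0n ?expn_gt0 ?n0 // in h2; last first.
    by apply: prodn_cond_gt0 => p pp; rewrite expn_gt0 prime_gt0.
  rewrite ln_prod_nat in h2; last by move=> p pp; rewrite expn_gt0 prime_gt0.
  rewrite natrX lnXn // in h2.
  apply: le_trans (le_trans h2 _); last by rewrite mulr_natl.
  rewrite [X in _ <= X](eq_bigr (fun p => (n %/ p)%:R * ln (p%:R : R))) //.
  move=> p pp; rewrite natrX lnXn ?ltr0n ?(prime_gt0 pp) //.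
  by rewrite mulr_natl.
have hT : \sum_(0 <= p < n.+1 | prime p) ln (p%:R : R) <= n%:R * ln 4.
  have h2 := cheb n; rewrite -(ler_nat R) in h2.
  rewrite -ler_ln ?posrE ?ltr0n ?expn_gt0 // in h2; last first.
    by apply: prodn_cond_gt0 => p pp; rewrite prime_gt0.
  rewrite ln_prod_nat in h2; last by move=> p pp; rewrite prime_gt0.
  rewrite natrX lnXn // in h2; apply: (le_trans h2).
  by rewrite mulr_natl.
rewrite -(ler_pM2l hn) mulrDr mulr_sumr.
apply: le_trans (lerD hL hT); rewrite -big_split /=; apply: ler_sum => p pp.
have p0 : (0 : R) < p%:R by rewrite ltr0n prime_gt0.
have lp : (0 : R) <= ln p%:R by apply: ln_ge0; rewrite ler1n prime_gt0.
have := nat_div_ge n (prime_gt0 pp) => h.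
have e : n%:R * (ln (p%:R : R) / p%:R) = (n%:R / p%:R) * ln (p%:R : R) by ring.
rewrite e; have e2 : (n %/ p)%:R * ln (p%:R : R) + ln p%:R = ((n %/ p)%:R + 1) * ln p%:R by ring.
by rewrite e2; apply: ler_wpM2r => //; rewrite -lerBlDr.
Qed.

Definition SA (N : nat) : R := \sum_(0 <= p < N.+1 | prime p) ln (p%:R : R) / p%:R.
Definition SB (N : nat) : R := \sum_(0 <= p < N.+1 | prime p) (p%:R : R)^-1.

Lemma sum_recr_prime (F : nat -> R) N :
  \sum_(0 <= p < N.+2 | prime p) F p =
  \sum_(0 <= p < N.+1 | prime p) F p + (if prime N.+1 then F N.+1 else 0).
Proof. by rewrite big_mkcond big_nat_recr //= -big_mkcond. Qed.

Lemma ln_ratio_ge (l0 l1 : R) : 0 < l0 -> 0 < l1 -> 1 - l0 / l1 <= ln l1 - ln l0.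
Proof.
move=> h0 h1; have h : -1 < l0 / l1 - 1 by have := divr_gt0 h0 h1; lra.
have := le_ln1Dx h; rewrite addrC subrK ln_div ?posrE // => h'; lra.
Qed.

Definition C2 : R := 1 + ln 4 / ln 2 - ln (ln 2).

Lemma mertens2_aux k :
  SB k.+2 + (ln (k.+2)%:R + ln 4 - SA k.+2) / ln (k.+2)%:R
  <= 1 + ln 4 / ln 2 + ln (ln (k.+2)%:R) - ln (ln 2).
Proof.
elim: k => [|k IH].
  rewrite /SA /SB !sum_recr_prime big_mkcond !big_nat_recr //= big_nil.
  rewrite big_mkcond big_nat1 /= !add0r.
  have l2 : (0 : R) < ln 2 by apply: ln_gt0; rewrite ltr1n.
  have -> : (2^-1 + (ln 2 + ln 4 - (ln 2 / 2)) / ln 2 : R) = 1 + ln 4 / ln 2.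
    by field; rewrite lt0r_neq0.
  by rewrite addrK.
have l0 : (0 : R) < ln k.+2%:R by apply: ln_gt0; rewrite ltr1n.
have l1 : (0 : R) < ln k.+3%:R by apply: ln_gt0; rewrite ltr1n.
have l01 : ln (k.+2%:R : R) < ln k.+3%:R by rewrite ltr_ln ?posrE ?ltr0n // ltr_nat.
have hM := mertens1 (isT : (0 < k.+2)%N); rewrite -/(SA k.+2) in hM.
have hr := ln_ratio_ge l0 l1.
rewrite /SB /SA sum_recr_prime -/(SB k.+2) [X in (_ - X)]sum_recr_prime -/(SA k.+2).
set a := SA k.+2 in IH hM *; set b := SB k.+2 in IH *.
set L0 := ln (k.+2%:R : R) in IH hM l0 l01 hr *; set L1 := ln (k.+3%:R : R) in l1 l01 hr *.
have key : (a - ln 4) * (L0^-1 - L1^-1) <= ln L1 - ln L0.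
  apply: le_trans hr; have -> : 1 - L0 / L1 = L0 * (L0^-1 - L1^-1) by field; rewrite ?lt0r_neq0.
  apply: ler_wpM2r; last lra.
  by rewrite subr_ge0 lef_pV2 ?posrE // ltW.
case: (prime k.+3).
  set e := (k.+3%:R : R)^-1.
  have -> : b + e + (L1 + ln 4 - (a + L1 / k.+3%:R)) / L1
     = b + (L0 + ln 4 - a) / L0 + (a - ln 4) * (L0^-1 - L1^-1).
    by rewrite /e; field; rewrite ?lt0r_neq0 ?ltr0n.
  lra.
have -> : b + 0 + (L1 + ln 4 - (a + 0)) / L1
     = b + (L0 + ln 4 - a) / L0 + (a - ln 4) * (L0^-1 - L1^-1).
  by field; rewrite ?lt0r_neq0 ?ltr0n.
lra.
Qed.

Lemma mertens2 N : (2 <= N)%N -> SB N <= ln (ln N%:R) + C2.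
Proof.
case: N => [|[|k]] // _; have := mertens2_aux k.
have l0 : (0 : R) < ln k.+2%:R by apply: ln_gt0; rewrite ltr1n.
have hM := mertens1 (isT : (0 < k.+2)%N); rewrite -/(SA k.+2) in hM.
have : 0 <= (ln k.+2%:R + ln 4 - SA k.+2) / ln (k.+2%:R : R).
  by apply: divr_ge0; lra.
rewrite /C2; lra.
Qed.
End S.



Section S.
Variable R : realType.

Lemma logn_lt_bound p d N : (0 < d)%N -> (d < N)%N -> (logn p d < N)%N.
Proof.
move=> d0 dN; case: (posnP (logn p d)) => [->|lp]; first lia.
have pp : prime p by move: lp; rewrite logn_gt0 mem_primes => /andP[].
have h1 := dvdn_leq d0 (pfactor_dvdnn p d).
have h2 : (logn p d < 2 ^ logn p d)%N by apply: ltn_expl.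
have h3 : (2 ^ logn p d <= p ^ logn p d)%N by rewrite leq_exp2r // prime_gt1.
lia.
Qed.

Lemma euler_bound (N : nat) (A : {pred 'I_N}) (F : nat -> nat -> R) :
  (forall p k, 0 <= F p k) ->
  (forall d : 'I_N, d \in A -> (0 < d)%N) ->
  \sum_(d in A) \prod_(p < N) F p (logn p d) <= \prod_(p < N) \sum_(k < N) F p (k : nat).
Proof.
move=> F0; case: N A => [|N] A A0.
  by rewrite big_ord0 big1 ?ler01 // => -[].
pose h := fun d : 'I_N.+1 => [ffun p : 'I_N.+1 => (inord (logn p d) : 'I_N.+1)].
have hv : forall d (p : 'I_N.+1), d \in A -> (h d p : nat) = logn p d.
  move=> d p dA; rewrite /h ffunE inordK //.
  by apply: logn_lt_bound; [apply: A0 | case: d dA].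
have hinj : {in A &, injective h}.
  move=> d1 d2 d1A d2A e; apply: val_inj => /=.
  have hp : forall p : 'I_N.+1, logn p d1 = logn p d2.
    by move=> p; rewrite -(hv d1 p d1A) -(hv d2 p d2A) e.
  have f1 := factor_range (A0 d1 d1A) (_ : forall p, p \in primes d1 -> (p < N.+1)%N).
  have f2 := factor_range (A0 d2 d2A) (_ : forall p, p \in primes d2 -> (p < N.+1)%N).
  rewrite f1; last first.
    move=> p; rewrite mem_primes => /and3P[_ d0 /(dvdn_leq d0) hh]; exact: leq_ltn_trans hh (ltn_ord d1).
  rewrite [X in _ = X]f2; last first.
    move=> p; rewrite mem_primes => /and3P[_ d0 /(dvdn_leq d0) hh]; exact: leq_ltn_trans hh (ltn_ord d2).
  rewrite !big_mkord; apply: eq_bigr => p _; by rewrite hp.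
pose Gf := fun f : {ffun 'I_N.+1 -> 'I_N.+1} => \prod_(p < N.+1) F p (f p).
have -> : \sum_(d in A) \prod_(p < N.+1) F p (logn p d) = \sum_(d in A) Gf (h d).
  by apply: eq_bigr => d dA; rewrite /Gf; apply: eq_bigr => p _; rewrite hv.
rewrite -big_imset // bigA_distr_bigA /=.
rewrite [X in _ <= X](bigID (mem (h @: A))) /= -[X in X <= _]addr0.
apply: lerD; first by apply: le_refl.
by apply: sumr_ge0 => f _; apply: prodr_ge0 => p _.
Qed.
End S.



Section S.
Variable R : realType.

Lemma geom_bound (q : R) M : 0 <= q < 1 ->
  \sum_(k < M) q ^+ k.+1 <= q / (1 - q).
Proof.
move=> /andP[q0 q1].
have e : (1 - q) * \sum_(k < M) q ^+ k.+1 = q - q ^+ M.+1.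
  elim: M => [|M IH]; first by rewrite big_ord0 mulr0 expr1 subrr.
  rewrite big_ord_recr /= mulrDr IH [q ^+ M.+2]exprS; set z := q ^+ M.+1; ring.
have hq : 0 < 1 - q by lra.
rewrite ler_pdivlMr // mulrC e; have := exprn_ge0 M.+1 q0; lra.
Qed.

Lemma powR_exprn (a r : R) k : 0 <= a -> (a ^+ k) `^ r = (a `^ r) ^+ k.
Proof.
move=> a0; rewrite -powR_mulrn // -powRrM mulrC powRrM powR_mulrn //.
exact: powR_ge0.
Qed.

Lemma powR_prod (I : Type) (s : seq I) (P : pred I) (F : I -> R) (r : R) :
  (forall i, P i -> 0 <= F i) ->
  (\prod_(i <- s | P i) F i) `^ r = \prod_(i <- s | P i) (F i `^ r).
Proof.
move=> hF; elim: s => [|a s IH]; first by rewrite !big_nil powR1.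
rewrite !big_cons; case: (boolP (P a)) => // pa.
rewrite powRM ?IH //; first exact: hF.
by apply: prodr_ge0.
Qed.

Lemma prod_const_seq (s : seq nat) (c : R) : \prod_(i <- s) c = c ^+ size s.
Proof. by elim: s => [|a s IH]; rewrite ?big_nil ?big_cons ?IH ?exprS. Qed.

Lemma powR_lt1 (a r : R) : 1 < a -> r < 0 -> a `^ r < 1.
Proof.
move=> a1 r0; rewrite /powR; have -> : (a == 0) = false by apply/negbTE; rewrite gt_eqF //; lra.
rewrite expR_lt1; have := ln_gt0 a1 => h; rewrite nmulr_rlt0 //.
Qed.

Lemma sum_widen_ge0 (f : nat -> R) b c : (b <= c)%N -> (forall p, 0 <= f p) ->
  \sum_(0 <= p < b) f p <= \sum_(0 <= p < c) f p.
Proof.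
move=> hbc h; rewrite (@big_cat_nat _ _ _ b 0 c) //= -[X in X <= _]addr0.
by apply: lerD => //; apply: sumr_ge0.
Qed.

Lemma sum_ext0 (f : nat -> R) b c : (b <= c)%N -> (forall p, (b <= p)%N -> f p = 0) ->
  \sum_(0 <= p < c) f p = \sum_(0 <= p < b) f p.
Proof.
move=> hbc h; rewrite (@big_cat_nat _ _ _ b 0 c) //=.
have -> : \sum_(b <= p < c) f p = 0.
  by rewrite big_nat_cond big1 // => p /andP[/andP[h1 _] _]; apply: h.
by rewrite addr0.
Qed.
End S.



Section S.
Variable R : realType.

Lemma stepB (x δ y α : R) (d : nat) : 0 < δ -> 1 <= x -> 0 <= α ->
  x `^ δ < d%:R -> in_smooth x y d ->
  (3%:R : R) ^+ omega d / d%:R <= x `^ (-(δ*α)) *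
    \prod_(p < (Num.trunc x).+1) (if logn p d == 0%N then 1 else
       if prime p && (p%:R < y) then 3 * ((p ^ logn p d)%:R `^ (α - 1)) else 0).
Proof.
move=> d0 x1 a0 xd /andP[/andP[dpos dx] /allP hall].
set N := (Num.trunc x).+1.
have dN : (d < N)%N.
  by rewrite /N ltnS truncn_ge_nat; [exact: ltW dx | lra].
have pN : forall p, p \in primes d -> (p < N)%N.
  move=> p; rewrite mem_primes => /and3P[_ _ /(dvdn_leq dpos) h]; lia.
have eF : forall p : 'I_N, (if logn p d == 0%N then 1 else
       if prime p && (p%:R < y) then 3 * ((p ^ logn p d)%:R `^ (α - 1)) else 0)
     = (if (p : nat) \in primes d then 3 else 1) * ((p ^ logn p d)%:R `^ (α - 1)) :> R.
  move=> p; case: (posnP (logn p d)) => [e|lp].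
    have : (p : nat) \notin primes d by rewrite -logn_gt0 e.
    by move=> /negbTE ->; rewrite e expn0 powR1 mulr1.
  have pd : (p : nat) \in primes d by rewrite -logn_gt0.
  rewrite pd; rewrite hall // andbT; have -> // : prime p.
  by move: pd; rewrite mem_primes => /andP[].
rewrite (eq_bigr _ (fun p _ => eF p)) big_split /=.
have e1 : \prod_(p < N) (if (p : nat) \in primes d then 3 else 1) = (3 : R) ^+ omega d.
  rewrite -big_mkcond /= -(big_mkord (fun p => p \in primes d) (fun _ => (3 : R))).
  rewrite -big_filter (perm_big (primes d)) ?prod_const_seq //.
  apply: uniq_perm; [by apply: filter_uniq; apply: iota_uniq | exact: primes_uniq|].
  move=> p; rewrite mem_filter mem_index_iota; case: (boolP (p \in primes d)) => //= h.
  by rewrite (pN p h).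
have e2 : \prod_(p < N) ((p ^ logn p d)%:R `^ (α - 1)) = (d%:R : R) `^ (α - 1).
  rewrite -powR_prod; last by move=> *; apply: ler0n.
  rewrite -natr_prod -(big_mkord xpredT (fun p => (p ^ logn p d)%N)) -factor_range //.
rewrite e1 e2.
have dp : (0 : R) < d%:R by rewrite ltr0n.
have xp : (0 : R) < x by lra.
have xdp : 0 < x `^ δ by apply: powR_gt0.
rewrite powRB; last by rewrite (gt_eqF dp) implybT.
rewrite powRr1 ?(ltW dp) // powRN powRrM.
set u := (x `^ δ) `^ α; set v := (d%:R : R) `^ α.
have u0 : 0 < u by apply: powR_gt0.
have uv : u <= v by apply: ge0_ler_powR => //; rewrite ?nnegrE ltW.
have -> : u^-1 * (3 ^+ omega d * (v / d%:R)) = (3 ^+ omega d / d%:R) * (v / u).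
  by field; rewrite ?gt_eqF.
apply: ler_peMr; first by apply: divr_ge0; [apply: exprn_ge0 | apply: ltW].
by rewrite ler_pdivlMr // mul1r.
Qed.

Definition Fk (y α : R) (p k : nat) : R := if k == 0%N then 1 else
       if prime p && (p%:R < y) then 3 * ((p ^ k)%:R `^ (α - 1)) else 0.

Definition gq (α : R) (p : nat) : R := 3 * (p%:R `^ (α - 1)) / (1 - p%:R `^ (α - 1)).

Lemma q_props (α : R) p : prime p -> α < 1 ->
  0 <= (p%:R : R) `^ (α - 1) < 1.
Proof.
move=> pp a1; rewrite powR_ge0 /=; apply: powR_lt1; last lra.
by rewrite ltr1n prime_gt1.
Qed.

Lemma gq_ge0 (α : R) p : prime p -> α < 1 -> 0 <= gq α p.
Proof.
move=> pp a1; have /andP[h0 h1] := q_props pp a1; rewrite /gq.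
by apply: divr_ge0; [apply: mulr_ge0 | lra].
Qed.

Lemma stepD (y α : R) M : α < 1 ->
  \prod_(p < M.+1) \sum_(k < M.+1) Fk y α p k <=
  expR (\sum_(p < M.+1) (if prime p && ((p : nat)%:R < y) then gq α p else 0)).
Proof.
move=> a1; rewrite expR_sum; apply: ler_prod => p _; apply/andP; split.
  apply: sumr_ge0 => k _; rewrite /Fk; case: (_ == _) => //.
  case: (prime p && _) => //; apply: mulr_ge0 => //; exact: powR_ge0.
apply: le_trans (expR_ge1Dx _); rewrite big_ord_recl /= /Fk /=.
apply: lerD => //.
case: (boolP (prime p && (p%:R < y))) => [/andP[pp py]|] /=; last first.
  by move=> _; rewrite big1.
have /andP[h0 h1] := q_props pp a1.
rewrite /gq -mulrA -mulr_sumr ler_pM2l //.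
apply: le_trans (geom_bound M (q := p%:R `^ (α - 1)) _); last by rewrite h0 h1.
by apply: ler_sum => k _; rewrite /bump /= add1n natrX powR_exprn.
Qed.

Lemma stepE (y α : R) N : α < 1 ->
  \sum_(p < N) (if prime p && ((p : nat)%:R < y) then gq α p else 0) <=
  \sum_(0 <= p < (Num.trunc y).+1 | prime p) gq α p.
Proof.
move=> a1; set M := (Num.trunc y).+1.
pose a := fun p : nat => if prime p && (p%:R < y) then gq α p else 0.
have a0 : forall p, 0 <= a p.
  by move=> p; rewrite /a; case: (boolP (prime p)) => //= pp; case: (_ < _) => //; apply: gq_ge0.
rewrite -(big_mkord xpredT a).
apply: le_trans (sum_widen_ge0 (c := maxn N M) _ a0) _; first exact: leq_maxl.
rewrite (sum_ext0 (b := M)); [|exact: leq_maxr|]; last first.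
  move=> p hp; rewrite /a; case: (prime p) => //=.
  case: ifP => // py; exfalso.
  have := lt_trans py (truncnS_gt y); rewrite ltr_nat; rewrite /M in hp.
  by rewrite ltnS leqNgt hp.
rewrite [X in _ <= X]big_mkcond; apply: ler_sum => p _; rewrite /a.
case: (boolP (prime p)) => pp //=; case: (_ < _) => //; exact: gq_ge0.
Qed.

Lemma rankin (x δ y α : R) : 0 < δ -> 1 <= x -> 0 <= α -> α < 1 ->
  smooth_sum x δ y <= x `^ (-(δ*α)) *
    expR (\sum_(0 <= p < (Num.trunc y).+1 | prime p) gq α p).
Proof.
move=> d0 x1 a0 a1; rewrite /smooth_sum; set N := (Num.trunc x).+1.
pose A : {pred 'I_N} := fun d => (x `^ δ < (d : nat)%:R) && ((d : nat)%:R <= x) && in_smooth x y d.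
apply: le_trans (_ : _ <= \sum_(d in A) x `^ (-(δ*α)) * \prod_(p < N) Fk y α p (logn p d)) _.
  apply: ler_sum => d /andP[/andP[h1 h2] h3]; exact: stepB.
rewrite -mulr_sumr; apply: ler_wpM2l; first exact: powR_ge0.
apply: le_trans (@euler_bound R N A (Fk y α) _ _) _.
- by move=> p k; rewrite /Fk; case: (_ == _) => //; case: (_ && _) => //; apply: mulr_ge0 => //; exact: powR_ge0.
- by move=> d /andP[_ /andP[/andP[]]].
apply: le_trans (@stepD y α (Num.trunc x) a1) _.
by rewrite ler_expR; apply: stepE.
Qed.
End S.



Section S.
Variable R : realType.

Lemma q_le34 (α : R) p : prime p -> α <= 2^-1 -> (p%:R : R) `^ (α - 1) <= 3 / 4.
Proof.
move=> pp ah; have p2 : (2 : R) <= p%:R by rewrite ler_nat prime_gt1.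
set q := (p%:R : R) `^ (α - 1).
have q0 : 0 <= q by apply: powR_ge0.
have hq2 : q ^+ 2 <= 2^-1.
  rewrite /q -powR_mulrn; last exact: powR_ge0.
  rewrite -powRrM; apply: le_trans (_ : _ <= (p%:R : R) `^ (-1)) _.
    by apply: ler_powR; [lra | rewrite mulrC; lra].
  rewrite powR_inv1 ?ler0n //; rewrite lef_pV2 ?posrE //; lra.
have : q ^+ 2 = q * q by rewrite expr2.
nra.
Qed.

Lemma powR_nat_ge0 (p : nat) (r : R) : 0 <= (p%:R : R) `^ r.
Proof. exact: powR_ge0. Qed.

Lemma q_split (α : R) p : prime p -> (p%:R : R) `^ (α - 1) = (p%:R `^ α) / p%:R.
Proof.
move=> pp; have p0 : (0 : R) < p%:R by rewrite ltr0n prime_gt0.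
by rewrite powRB ?powRr1 ?ltW // (gt_eqF p0) implybT.
Qed.

Lemma gq_le12 (α : R) p : prime p -> α <= 2^-1 -> α < 1 ->
  gq α p <= 12 * ((p%:R : R) `^ α / p%:R).
Proof.
move=> pp ah a1; have h34 := q_le34 pp ah; rewrite /gq -q_split //.
set q := (p%:R : R) `^ (α - 1) in h34 *.
have q0 : 0 <= q by apply: powR_ge0.
rewrite ler_pdivrMr; last lra.
nra.
Qed.

Lemma expR_sub1_le (z : R) : 0 <= z -> expR z - 1 <= z * expR z.
Proof.
move=> z0; have h := expR_ge1Dx (- z).
have e : expR z * expR (- z) = 1 by rewrite expRxMexpNx_1.
have ez : 0 < expR z by apply: expR_gt0.
nra.
Qed.

Lemma gq_le_gen (α y : R) p : prime p -> 0 <= α -> α <= 2^-1 -> (p%:R : R) <= y ->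
  gq α p <= 3 / p%:R + 3 * α * (y `^ α) * (ln p%:R / p%:R) + 12 * (y `^ α) ^+ 2 / (p%:R ^+ 2).
Proof.
move=> pp a0 ah py; have h34 := q_le34 pp ah.
have p0 : (0 : R) < p%:R by rewrite ltr0n prime_gt0.
have a1 : α < 1 by lra.
have hE : (p%:R : R) `^ α <= y `^ α by apply: ge0_ler_powR => //; rewrite nnegrE ?ltW //; lra.
have hz : (p%:R : R) `^ α - 1 <= α * ln p%:R * p%:R `^ α.
  rewrite /powR (gt_eqF p0) /=; apply: expR_sub1_le; apply: mulr_ge0 => //.
  by apply: ln_ge0; rewrite ler1n prime_gt0.
have pa0 : (0 : R) <= p%:R `^ α by apply: powR_ge0.
have lp0 : (0 : R) <= ln p%:R by apply: ln_ge0; rewrite ler1n prime_gt0.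
have h1 : gq α p <= 3 * ((p%:R : R) `^ (α - 1)) + 12 * (p%:R `^ (α - 1)) ^+ 2.
  rewrite /gq; set q := (p%:R : R) `^ (α - 1) in h34 *.
  have q0 : 0 <= q by apply: powR_ge0.
  rewrite ler_pdivrMr; last lra.
  rewrite expr2; nra.
apply: le_trans h1 _; rewrite q_split //.
set P := (p%:R : R) `^ α in hE hz pa0 *; set E := y `^ α in hE *.
have e1 : 3 * (P / p%:R) = 3 / p%:R + 3 * (P - 1) / p%:R by field; rewrite gt_eqF.
rewrite e1 -!addrA; apply: lerD => //; apply: lerD.
  have e2 : 3 * (P - 1) / p%:R = (3 * (P - 1)) * p%:R^-1 by ring.
  have e3 : 3 * α * E * (ln p%:R / p%:R) = (3 * α * E * ln p%:R) * p%:R^-1 by ring.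
  rewrite e3; apply: ler_wpM2r; first by rewrite invr_ge0 ltW.
  have : α * ln p%:R * P <= α * ln p%:R * E by apply: ler_wpM2l => //; apply: mulr_ge0.
  lra.
have e2 : 12 * (P / p%:R) ^+ 2 = (12 * (P * P)) * (p%:R ^+ 2)^-1 by rewrite !expr2; field; rewrite gt_eqF.
have e3 : 12 * E ^+ 2 / p%:R ^+ 2 = (12 * (E * E)) * (p%:R ^+ 2)^-1 by rewrite expr2.
rewrite e2 e3; apply: ler_wpM2r; first by rewrite invr_ge0 exprn_ge0 // ltW.
nra.
Qed.


Lemma trunc_facts (y : R) : 2 <= y ->
  (2 <= Num.trunc y)%N /\ ((Num.trunc y)%:R <= y) /\
  ln (ln (Num.trunc y)%:R) <= ln (ln y) /\ ln ((Num.trunc y)%:R : R) <= ln y.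
Proof.
move=> y2; have y0 : 0 <= y by lra.
have hM : (2 <= Num.trunc y)%N by rewrite truncn_ge_nat.
have hMy : ((Num.trunc y)%:R <= y) by rewrite truncn_le.
have M0 : (0 : R) < (Num.trunc y)%:R by rewrite ltr0n; lia.
have l1 : ln ((Num.trunc y)%:R : R) <= ln y by rewrite ler_ln ?posrE //; lra.
have lM : 0 < ln ((Num.trunc y)%:R : R) by apply: ln_gt0; rewrite ltr1n; lia.
do 3 (split => //).
by rewrite ler_ln ?posrE //; lra.
Qed.

Lemma sum_gq_part1 (α y : R) : 0 <= α -> α <= 2^-1 -> 2 <= y ->
  \sum_(0 <= p < (Num.trunc y).+1 | prime p) gq α p <= 12 * y `^ α * (ln (ln y) + C2 R).
Proof.
move=> a0 ah y2; have [hM [hMy [hll hl]]] := trunc_facts y2.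
apply: le_trans (_ : _ <= \sum_(0 <= p < (Num.trunc y).+1 | prime p) 12 * y `^ α * (p%:R : R)^-1) _.
  rewrite big_nat_cond [X in _ <= X]big_nat_cond.
  apply: ler_sum => p /andP[/andP[_ hp] pp]; apply: le_trans (gq_le12 pp ah _) _; first lra.
  rewrite mulrA; apply: ler_wpM2r; first by rewrite invr_ge0 ler0n.
  have hpy : (p%:R : R) <= y by apply: le_trans hMy; rewrite ler_nat -ltnS.
  apply: ler_wpM2l => //; apply: ge0_ler_powR => //; rewrite ?nnegrE ?ler0n //; lra.
rewrite -mulr_sumr; apply: ler_wpM2l; first by apply: mulr_ge0 => //; apply: powR_ge0.
apply: le_trans (@mertens2 R _ hM) _; lra.
Qed.

Lemma sum_p2_aux N : \sum_(0 <= p < N.+2 | prime p) ((p%:R : R) ^+ 2)^-1 <= 1 - (N.+1%:R)^-1.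
Proof.
elim: N => [|N IH].
  by rewrite big_mkcond !big_nat_recr //= big_nil invr1 !add0r subrr.
rewrite (sum_recr_prime (fun p => ((p%:R : R) ^+ 2)^-1)).
have a0 : (0 : R) < N.+1%:R by rewrite ltr0n.
have hb : (N.+2%:R : R) = N.+1%:R + 1 by rewrite -natr1.
set a := (N.+1%:R : R) in a0 hb IH *; set b := (N.+2%:R : R) in hb *.
have b0 : 0 < b by lra.
have an : a != 0 by rewrite gt_eqF.
have bn : a + 1 != 0 by rewrite gt_eqF //; lra.
have e : a^-1 - b^-1 = (a * b)^-1.
  rewrite hb; field; have hN : (0:R) <= N%:R by apply: ler0n.
  by apply/andP; split; rewrite gt_eqF //; lra.
have h : (b ^+ 2)^-1 <= (a * b)^-1.
  rewrite lef_pV2 ?posrE ?exprn_gt0 ?mulr_gt0 // expr2; apply: ler_wpM2r; lra.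
have h0 : 0 <= (b ^+ 2)^-1 by rewrite invr_ge0 exprn_ge0 // ltW.
clearbody a b; case: (prime N.+2) => /=; lra.
Qed.

Lemma sum_p2 N : \sum_(0 <= p < N.+1 | prime p) ((p%:R : R) ^+ 2)^-1 <= 1.
Proof.
case: N => [|N]; first by rewrite big_mkcond big_nat_recr //= big_nil add0r.
have := sum_p2_aux N; have : 0 <= (N.+1%:R : R)^-1 by rewrite invr_ge0 ler0n.
set u := (N.+1%:R : R)^-1; clearbody u; lra.
Qed.

Lemma sum_gq_part2 (α y : R) : 0 <= α -> α <= 2^-1 -> 2 <= y ->
  \sum_(0 <= p < (Num.trunc y).+1 | prime p) gq α p <=
  3 * (ln (ln y) + C2 R) + 3 * α * y `^ α * (ln y + ln 4) + 12 * (y `^ α) ^+ 2.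
Proof.
move=> a0 ah y2; have [hM [hMy [hll hl]]] := trunc_facts y2.
set E := y `^ α; have E0 : 0 <= E by apply: powR_ge0.
apply: le_trans (_ : _ <= \sum_(0 <= p < (Num.trunc y).+1 | prime p)
   (3 * (p%:R : R)^-1 + 3 * α * E * (ln p%:R / p%:R) + 12 * E ^+ 2 * ((p%:R : R) ^+ 2)^-1)) _.
  rewrite big_nat_cond [X in _ <= X]big_nat_cond.
  apply: ler_sum => p /andP[/andP[_ hp] pp].
  have hpy : (p%:R : R) <= y by apply: le_trans hMy; rewrite ler_nat -ltnS.
  by apply: le_trans (gq_le_gen pp a0 ah hpy) _.
rewrite !big_split /= -!mulr_sumr.
have hS := @mertens2 R _ hM.
have hA := @mertens1 R (Num.trunc y) (ltn_trans (isT : (0 < 1)%N) hM).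
have hP := @sum_p2 (Num.trunc y).
rewrite -/(SB R (Num.trunc y)) -/(SA R (Num.trunc y)).
have h3 : 0 <= 3 * α * E by apply: mulr_ge0 => //; apply: mulr_ge0.
have h12 : 0 <= 12 * E ^+ 2 by apply: mulr_ge0 => //; apply: exprn_ge0.
apply: lerD; [apply: lerD|].
- by apply: ler_wpM2l => //; lra.
- by apply: ler_wpM2l => //; rewrite /SA; lra.
- by apply: le_trans (ler_wpM2l h12 hP) _; rewrite mulr1.
Qed.
End S.



Section S.
Variable R : realType.

Lemma expR1_ge2 : (2 : R) <= expR 1.
Proof. by have := @expR_ge1Dx R 1. Qed.

Lemma powR_def (x r : R) : 0 < x -> x `^ r = expR (r * ln x).
Proof. by move=> x0; rewrite /powR gt_eqF. Qed.

Lemma powRD_pos (x r s : R) : 0 < x -> x `^ (r + s) = x `^ r * x `^ s.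
Proof. by move=> x0; rewrite powRD // (gt_eqF x0) implybT. Qed.

Lemma part1_asym (eps η L : R) : 0 < eps -> 0 < η -> η <= 4^-1 ->
  expR 1 + (1 + 24 * (2 / η + `|C2 R|) / eps) `^ η^-1 <= L ->
  12 * (L ^+ 2) `^ (2^-1 - η) * (ln (ln (L ^+ 2)) + C2 R) <= eps / 2 * L.
Proof.
move=> e0 h0 h4 hL.
set K := 2 / η + `|C2 R|.
set U0 := 1 + 24 * K / eps.
have K0 : 0 <= K by apply: addr_ge0; [apply: divr_ge0; lra | apply: normr_ge0].
have U01 : 1 <= U0.
  rewrite /U0 lerDl; apply: divr_ge0; [apply: mulr_ge0 => //| lra].
have hU0 : 0 <= (U0 `^ η^-1) by apply: powR_ge0.
have e2 := expR1_ge2.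
have L2 : 2 <= L by lra.
have L0 : 0 < L by lra.
set u := L `^ η.
have hu : U0 <= u.
  have : U0 `^ η^-1 <= L by lra.
  move=> h; have := ge0_ler_powR (ltW h0) _ _ h; rewrite ?nnegrE => /(_ hU0 (ltW L0)).
  by rewrite -powRrM mulVf ?gt_eqF // powRr1 //; lra.
have u1 : 1 <= u by lra.
have hlnL : ln L <= u / η.
  have := ln_sublinear (lt_le_trans ltr01 u1); rewrite /u ln_powR => h.
  by rewrite ler_pdivlMr // mulrC; apply: ltW.
have lnL1 : 1 <= ln L.
  by rewrite -(expRK 1) ler_ln ?posrE ?expR_gt0 //; lra.
have hll : ln (ln (L ^+ 2)) <= 2 * ln L.
  rewrite lnXn // mulr2n; apply: le_trans (ltW (ln_sublinear _)) _; lra.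
have hb : ln (ln (L ^+ 2)) + C2 R <= K * u.
  have : C2 R <= `|C2 R| by apply: ler_norm.
  have : 2 * ln L <= 2 / η * u by rewrite mulrAC -mulrA; apply: ler_wpM2l => //; lra.
  have : `|C2 R| <= `|C2 R| * u by apply: ler_peMr => //; apply: normr_ge0.
  rewrite /K mulrDl; lra.
have ey : (L ^+ 2) `^ (2^-1 - η) = L `^ (1 - 2 * η).
  by rewrite -powR_mulrn ?(ltW L0) // -powRrM; congr (_ `^ _); field.
rewrite ey.
set P := L `^ (1 - 2 * η).
have P0 : 0 < P by apply: powR_gt0.
have eL : L = P * u * u.
  rewrite /P /u -!powRD_pos //.
  have -> : 1 - 2 * η + η + η = 1 by ring.
  by rewrite powRr1 // ltW.
apply: le_trans (_ : _ <= 12 * P * (K * u)) _.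
  by apply: ler_wpM2l => //; apply: mulr_ge0 => //; apply: ltW.
rewrite [X in _ <= _ * X]eL.
have hu2 : 24 * K / eps <= u by move: hu; rewrite /U0; lra.
have : 24 * K <= eps * u by rewrite -ler_pdivrMl // mulrC.
move=> h; have Pu : 0 < P * u by apply: mulr_gt0 => //; lra.
have -> : 12 * P * (K * u) = (P * u) * (12 * K) by ring.
have -> : eps / 2 * (P * u * u) = (P * u) * (eps * u / 2) by ring.
apply: ler_wpM2l; [exact: ltW | lra].
Qed.

Lemma part1 (δ : R) : 0 < δ -> forall eps : R, 0 < eps ->
  exists C x0 : R, forall x : R, x0 <= x ->
    smooth_sum x δ (ln x ^+ 2) <= C * x `^ (- (δ / 2) + eps).
Proof.
move=> d0 eps e0.
set D := 2 * δ + 4 * eps; have D0 : 0 < D by rewrite /D; lra.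
set η := eps / D.
have eη : η * D = eps by rewrite /η; field; rewrite gt_eqF.
have η0 : 0 < η by apply: divr_gt0.
have η4 : η <= 4^-1.
  have : η * (4 * eps) <= η * D by apply: ler_wpM2l; [lra | rewrite /D; lra].
  rewrite eη => h; have : η * 4 <= 1.
    by rewrite -(ler_pM2r e0) mul1r -mulrA.
  lra.
have δη : δ * η <= eps / 2.
  have : η * (2 * δ) <= η * D by apply: ler_wpM2l; [lra | rewrite /D; lra].
  rewrite eη; lra.
set α := 2^-1 - η.
have a0 : 0 <= α by rewrite /α; lra.
have ah : α <= 2^-1 by rewrite /α; lra.
have a1 : α < 1 by lra.
set L0 := expR 1 + (1 + 24 * (2 / η + `|C2 R|) / eps) `^ η^-1.
have L0e : expR 1 <= L0 by rewrite /L0 lerDl; apply: powR_ge0.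
have e2 := @expR1_ge2.
exists 1, (expR L0) => x hx.
have x0 : 0 < x by apply: lt_le_trans hx; apply: expR_gt0.
have x1 : 1 <= x by apply: le_trans hx; rewrite -expR0 ler_expR; lra.
have hL : L0 <= ln x by rewrite -(expRK L0) ler_ln ?posrE ?expR_gt0.
have y2 : 2 <= ln x ^+ 2 by rewrite expr2; nra.
apply: le_trans (@rankin R x δ (ln x ^+ 2) α d0 x1 a0 a1) _.
have hS := sum_gq_part1 a0 ah y2.
have hA := part1_asym e0 η0 η4 hL.
have hE : expR (\sum_(0 <= p < (Num.trunc (ln x ^+ 2)).+1 | prime p) gq α p) <= x `^ (eps / 2).
  rewrite powR_def // ler_expR; rewrite /α in hS; lra.
apply: le_trans (ler_wpM2l (powR_ge0 _ _) hE) _.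
rewrite -powRD_pos // mul1r; apply: ler_powR => //.
rewrite /α; lra.
Qed.
End S.



Section S.
Variable R : realType.

Lemma keyT (δ A T : R) : 0 < δ -> 0 <= A -> 1 <= T ->
  A * T - δ / 4 * (T * ln T) <= A * expR (4 * A / δ).
Proof.
move=> d0 A0 T1; have T0 : 0 < T by lra.
have lT : 0 <= ln T by apply: ln_ge0.
have TlT : 0 <= T * ln T by apply: mulr_ge0 => //; lra.
have hE : 0 <= A * expR (4 * A / δ) by apply: mulr_ge0 => //; apply: expR_ge0.
case: (leP (4 * A / δ) (ln T)) => h.
  have : A <= δ / 4 * ln T.
    by move: h; rewrite ler_pdivrMr // => h; lra.
  move=> h2; have : A * T <= δ / 4 * ln T * T by apply: ler_wpM2r; lra.
  lra.
have : T <= expR (4 * A / δ).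
  by rewrite -[X in X <= _](lnK (x := T)) ?posrE // ler_expR; apply: ltW.
move=> h2; have : A * T <= A * expR (4 * A / δ) by apply: ler_wpM2l.
have : 0 <= δ / 4 * (T * ln T) by apply: mulr_ge0 => //; lra.
lra.
Qed.

Lemma part2 (δ : R) : 0 < δ ->
  exists c : R, 0 < c /\
     exists C x0 : R, forall x : R, x0 <= x ->
       forall t : nat, (0 < t)%N -> ln x ^+ 2 <= powR x (t%:R)^-1 ->
         smooth_sum x δ (powR x (t%:R)^-1)
           <= C * ln x ^+ 3 * expR (- (c * t%:R * ln (t%:R))).
Proof.
move=> d0.
set C1 : R := ln 4.
have C10 : 0 <= C1 by apply: ln_ge0; rewrite ler1n.
set A := 15 + 3 * C1.
have A0 : 0 <= A by rewrite /A; lra.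
set K := A * expR (4 * A / δ).
exists (δ / 4); split; first lra.
exists (expR (3 * C2 R + K)), (expR (expR 1)) => x hx t t0 hy.
have e2 := @expR1_ge2 R.
have x0 : 0 < x by apply: lt_le_trans hx; apply: expR_gt0.
have hL : expR 1 <= ln x by rewrite -(expRK (expR 1)) ler_ln ?posrE ?expR_gt0.
have x1 : 1 <= x.
  apply: le_trans hx; have := @expR_ge1Dx R (expR 1); have := expR_ge0 (1 : R); lra.
set L := ln x in hL hy *.
have L0 : 0 < L by lra.
have lnL1 : 1 <= ln L by rewrite -(expRK 1) ler_ln ?posrE ?expR_gt0 //; lra.
set T : R := t%:R.
have T1 : 1 <= T by rewrite /T ler1n.
have T0 : 0 < T by lra.
set y := x `^ T^-1 in hy *.
have lny : ln y = L / T by rewrite /y ln_powR mulrC.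
have y2 : 2 <= y by apply: le_trans hy; rewrite expr2; nra.
have y0 : 0 < y by lra.
have h2lnL : 2 * ln L <= ln y.
  have : ln (L ^+ 2) <= ln y by rewrite ler_ln ?posrE ?exprn_gt0.
  by rewrite lnXn // mulr2n; lra.
have lny0 : 0 < ln y by lra.
have TL : T <= L.
  have : T * ln y = L by rewrite lny; field; rewrite gt_eqF.
  move=> e; have : T * 1 <= T * ln y by apply: ler_wpM2l; lra.
  lra.
have lnTL : ln T <= ln L by rewrite ler_ln ?posrE.
have lnT0 : 0 <= ln T by apply: ln_ge0.
set s := ln T / 2.
have s0 : 0 <= s by rewrite /s; lra.
set α := s / ln y.
have a0 : 0 <= α by apply: divr_ge0 => //; lra.
have hαy : α * ln y = s by rewrite /α; field; rewrite gt_eqF.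
have a4 : α <= 4^-1.
  rewrite /α ler_pdivrMr //; rewrite /s; lra.
have ah : α <= 2^-1 by lra.
have a1 : α < 1 by lra.
have hαL : α * L = s * T.
  by rewrite -hαy lny; field; rewrite gt_eqF.
set E := y `^ α.
have hE : E = expR s by rewrite /E powR_def // hαy.
have E1 : 1 <= E by rewrite hE -expR0 ler_expR.
have E2 : E * E = T by rewrite hE -expRD /s -splitr lnK // posrE.
have Es : E * s <= T.
  rewrite -E2; apply: ler_wpM2l; first lra.
  have := ln_sublinear (lt_le_trans ltr01 E1); rewrite hE expRK => h; rewrite -hE; lra.
have hS := sum_gq_part2 a0 ah y2.
rewrite -/E in hS.
have hS2 : \sum_(0 <= p < (Num.trunc y).+1 | prime p) gq α p
    <= 3 * ln (ln y) + 3 * C2 R + A * T.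
  have e1 : 3 * α * E * (ln y + ln 4) = 3 * (E * s) + 3 * α * E * C1.
    by rewrite /C1 -hαy; ring.
  have : α * E * C1 <= E * E * C1.
    apply: ler_wpM2r => //; apply: ler_wpM2r; lra.
  rewrite expr2 E2 in hS; rewrite e1 in hS; rewrite /A; move=> h; rewrite E2 in h; nra.
apply: le_trans (@rankin R x δ y α d0 x1 a0 a1) _.
rewrite [x `^ _]powR_def // -/L -expRD.
have hk := keyT d0 A0 T1.
have hlly : expR (3 * ln (ln y)) = ln y ^+ 3.
  by rewrite -[3]/(3%:R) expRM_natl lnK // posrE.
have hly3 : ln y ^+ 3 <= L ^+ 3.
  apply: lerXn2r; rewrite ?nnegrE; try lra.
  rewrite lny ler_pdivrMr // ler_peMr //; lra.
apply: le_trans (_ : _ <= expR (3 * C2 R + K) * expR (3 * ln (ln y)) * expR (- (δ / 4 * T * ln T))) _.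
  rewrite -!expRD ler_expR.
  have : - (δ * α) * L = - (δ / 2) * (T * ln T).
    by rewrite mulNr -mulrA hαL /s; ring.
  move=> ->; rewrite /K; lra.
rewrite hlly; apply: ler_wpM2r; first by apply: expR_ge0.
by apply: ler_wpM2l => //; apply: expR_ge0.
Qed.
End S.


Unset Implicit Arguments.

Theorem lemma2p9 (R : realType) (delta : R) (hd0 : 0 < delta) (hd1 : delta < 1) :
  (forall eps : R, 0 < eps ->
     exists C x0 : R, forall x : R, x0 <= x ->
       smooth_sum x delta (ln x ^+ 2) <= C * powR x (- (delta / 2) + eps))
  /\
  (exists c : R, 0 < c /\
     exists C x0 : R, forall x : R, x0 <= x ->
       forall t : nat, (0 < t)%N -> ln x ^+ 2 <= powR x (t%:R)^-1 ->
         smooth_sum x delta (powR x (t%:R)^-1)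
           <= C * ln x ^+ 3 * expR (- (c * t%:R * ln (t%:R)))).
Proof.
split; [exact: part1 hd0 | exact: part2 hd0].
Qed.
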